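(* Let $\overline{\mathcal{O}}$, $\varphi$ be as in the context, let $K$ be a complete non-Archimedean field, and let $F:\overline{\mathcal{O}}\to K$ be a continuous non-vanishing function. Suppose that for all $n\in\mathbb{N}$ and all $\mathbf{x}=(\mathbf{x}_t)_t\in\overline{\mathcal{O}}$ with $|\mathbf{x}_t|<1$ for all $t$, $$\varphi^{(n)}(-\mathbf{x})=-\mathbf{x}\ \Longrightarrow\ \prod_{j=0}^{n-1}F\left(-\varphi^{(j)}(-\mathbf{x})\right)=1.$$ Then there exists a continuous non-vanishing function $G:\overline{\mathcal{O}}\to K$ such that $F(\mathbf{x})=\dfrac{G(\mathbf{x})}{G(-\varphi(-\mathbf{x}))}$ for all $\mathbf{x}\in\overline{\mathcal{O}}$.
   Context: Let $q$ be a prime power, $A=\mathbb{F}_q[\theta]$, $k=\mathbb{F}_q(\theta)$. Let $\mathcal{O}=\prod_t\mathcal{O}_t$ be a finite product with each $\mathcal{O}_t\in\{\mathbb{Z},A\}$; for each $t$ fix a prime number $p_t$ (if $\mathcal{O}_t=\mathbb{Z}$, with $\overline{\mathcal{O}}_t=\mathbb{Z}_{p_t}$) or a monic irreducible $v_t\in A$ (if $\mathcal{O}_t=A$, with $\overline{\mathcal{O}}_t=A_{v_t}$ the $v_t$-adic completion), and $\overline{\mathcal{O}}=\prod_t\overline{\mathcal{O}}_t$. Fix $\pi_t$ a positive power of $p_t$ resp. $v_t$. Each $\mathbf{x}_t\in\overline{\mathcal{O}}_t$ is uniquely $\sum_{i\ge0}x_{t,i}\pi_t^i$ with integer digits $0\le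 x_{t,i}<\pi_t$ (case $\mathbb{Z}$) or polynomial digits of degree $<\deg\pi_t$ (case $A$); $\varphi_t(\mathbf{x}_t)=\sum_{i\ge0}x_{t,i+1}\pi_t^i$ and $\varphi(\mathbf{x})=(\varphi_t(\mathbf{x}_t))_t$; $\varphi^{(j)}$ is the $j$-fold iterate. If $\varphi^{(n)}(\mathbf{y})=\mathbf{y}$ then each component $\mathbf{y}_t$ is an element of $\mathbb{Q}$ resp. $k$ (a ratio of an element of $\mathcal{O}_t$ and $1-\pi_t^n$); here $|\cdot|$ denotes the usual real absolute value on $\mathbb{Q}$ and the $\infty$-adic absolute value $|f/g|=q^{\deg f-\deg g}$ on $k$. *)

(* Defs.v *)
From HB Require Import structures.
From mathcomp Require Import all_boot all_order all_algebra.
From mathcomp Require Import reals.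
Set Implicit Arguments. Unset Strict Implicit. Unset Printing Implicit Defensive.
Import Order.TTheory GRing.Theory Num.Theory.
Local Open Scope ring_scope.

(* ---------- Components of type Z_p : elements are digit sequences d with 0 <= d i < pi,
   representing  sum_i d i * pi^i  (pi = p^e). ---------- *)

Definition trZ (pi : int) (d : nat -> int) (k : nat) : int :=
  \sum_(i < k) d i * pi ^+ i.

Definition digitsZ (pi : int) (d : nat -> int) : Prop :=
  forall i, 0 <= d i < pi.

(* digits of -x: the (i)th digit of the canonical representative of -x mod pi^(i+1) *)
Definition negZ (pi : int) (d : nat -> int) : nat -> int :=
  fun i => (((- trZ pi d i.+1) %% (pi ^+ i.+1))%Z %/ (pi ^+ i))%Z.

(* x is the rational a/b (b*x = a in Z_p) with |a/b| < 1 for the real absolute value *)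
Definition ratZ_lt1 (pi : int) (d : nat -> int) : Prop :=
  exists a b : int, b != 0 /\ (forall k, (pi ^+ k %| b * trZ pi d k - a)%Z) /\ `|a| < `|b|.

(* ---------- Components of type A_v (A = F_q[theta]) : digit sequences of polynomials
   of degree < deg pi (pi = v^e). ---------- *)

Definition trP (Fq : fieldType) (pi : {poly Fq}) (d : nat -> {poly Fq}) (k : nat) : {poly Fq} :=
  \sum_(i < k) d i * pi ^+ i.

Definition digitsP (Fq : fieldType) (pi : {poly Fq}) (d : nat -> {poly Fq}) : Prop :=
  forall i, (size (d i) < size pi)%N.

Definition negP (Fq : fieldType) (pi : {poly Fq}) (d : nat -> {poly Fq}) : nat -> {poly Fq} :=
  fun i => ((- trP pi d i.+1) %% (pi ^+ i.+1)) %/ (pi ^+ i).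

(* x is the element a/b of k = F_q(theta) (b*x = a in A_v) with |a/b|_oo < 1, i.e. deg a < deg b *)
Definition ratP_lt1 (Fq : fieldType) (pi : {poly Fq}) (d : nat -> {poly Fq}) : Prop :=
  exists a b : {poly Fq}, b != 0 /\ (forall k, pi ^+ k %| b * trP pi d k - a) /\
     (size a < size b)%N.

Definition phiD (T : Type) (d : nat -> T) : nat -> T := fun i => d i.+1.

(* ---------- The product Obar = prod_{t in I1} Z_{p_t} x prod_{t in I2} A_{v_t} ---------- *)

Definition pt (I1 I2 : finType) (Fq : fieldType) : Type :=
  ((I1 -> nat -> int) * (I2 -> nat -> {poly Fq}))%type.

Section Prod.
Variables (I1 I2 : finType) (Fq : fieldType).
Variables (piZ : I1 -> int) (piP : I2 -> {poly Fq}).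

Definition inO (x : pt I1 I2 Fq) : Prop :=
  (forall t, digitsZ (piZ t) (x.1 t)) /\ (forall t, digitsP (piP t) (x.2 t)).

Definition negO (x : pt I1 I2 Fq) : pt I1 I2 Fq :=
  (fun t => negZ (piZ t) (x.1 t), fun t => negP (piP t) (x.2 t)).

Definition phiO (x : pt I1 I2 Fq) : pt I1 I2 Fq :=
  (fun t => phiD (x.1 t), fun t => phiD (x.2 t)).

Definition eqO (x y : pt I1 I2 Fq) : Prop :=
  (forall t i, x.1 t i = y.1 t i) /\ (forall t i, x.2 t i = y.2 t i).

Definition agreeO (N : nat) (x y : pt I1 I2 Fq) : Prop :=
  (forall t i, (i < N)%N -> x.1 t i = y.1 t i) /\
  (forall t i, (i < N)%N -> x.2 t i = y.2 t i).

Definition smallO (x : pt I1 I2 Fq) : Prop :=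
  (forall t, ratZ_lt1 (piZ t) (x.1 t)) /\ (forall t, ratP_lt1 (piP t) (x.2 t)).

(* continuity of f : Obar -> K (product of adic topologies) w.r.t. the absolute value ab *)
Definition continuousO (R : realType) (K : fieldType) (ab : K -> R)
  (f : pt I1 I2 Fq -> K) : Prop :=
  forall x, inO x -> forall eps : R, 0 < eps ->
    exists N : nat, forall y, inO y -> agreeO N x y -> ab (f y - f x) < eps.
End Prod.

Definition nonarch_abs (R : realType) (K : fieldType) (ab : K -> R) : Prop :=
  [/\ ab 0 = 0, (forall x, x != 0 -> 0 < ab x),
      (forall x y, ab (x * y) = ab x * ab y) &
      (forall x y, ab (x + y) <= Num.max (ab x) (ab y))].

Definition complete_abs (R : realType) (K : fieldType) (ab : K -> R) : Prop :=
  forall u : nat -> K,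
    (forall eps : R, 0 < eps -> exists N, forall m n, (N <= m)%N -> (N <= n)%N ->
        ab (u m - u n) < eps) ->
    exists l : K, forall eps : R, 0 < eps -> exists N, forall n, (N <= n)%N ->
        ab (u n - l) < eps.

(* Main.v *)
Require Import Defs.
From HB Require Import structures.
From mathcomp Require Import all_boot all_order all_algebra.
From mathcomp Require Import reals.
From mathcomp Require Import zify ring lra.
From Stdlib Require Import FunctionalExtensionality ClassicalEpsilon.
Import Order.TTheory GRing.Theory Num.Theory.
Local Open Scope ring_scope.

Set Implicit Arguments. Unset Strict Implicit. Unset Printing Implicit Defensive.



Section ZDig.
Variable pi : int.
Hypothesis pi_gt1 : 1 < pi.

Lemma pi_gt0 : 0 < pi. Proof. lia. Qed.
Lemma piX_gt0 k : 0 < pi ^+ k. Proof. by apply: exprn_gt0; exact: pi_gt0. Qed.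
Lemma piX_neq0 k : pi ^+ k != 0. Proof. by rewrite gt_eqF ?piX_gt0. Qed.

Lemma trZS d k : trZ pi d k.+1 = trZ pi d k + d k * pi ^+ k.
Proof. by rewrite /trZ big_ord_recr. Qed.

Lemma trZ_bound d : digitsZ pi d -> forall k, 0 <= trZ pi d k < pi ^+ k.
Proof.
move=> hd; elim=> [|k IH]; first by rewrite /trZ big_ord0 expr0.
rewrite trZS exprS; have := hd k; have := piX_gt0 k.
move: IH; set P := pi ^+ k; set T := trZ pi d k; set a := d k => IH h1 h2.
nia.
Qed.

Definition cZ d k := ((- trZ pi d k) %% pi ^+ k)%Z.

Lemma cZ_bound d k : 0 <= cZ d k < pi ^+ k.
Proof. by rewrite /cZ modz_ge0 ?piX_neq0 ?ltz_pmod ?piX_gt0. Qed.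

Lemma cZ_S d k : (cZ d k.+1 %% pi ^+ k)%Z = cZ d k.
Proof.
rewrite -[RHS](modz_small (cZ_bound d k)); apply/eqP.
rewrite eqz_mod_dvd; apply/dvdzP.
set q1 := ((- trZ pi d k.+1) %/ pi ^+ k.+1)%Z.
set q0 := ((- trZ pi d k) %/ pi ^+ k)%Z.
have e1 : cZ d k.+1 = - trZ pi d k.+1 - q1 * pi ^+ k.+1.
  by rewrite /cZ {2}(divz_eq (- trZ pi d k.+1) (pi ^+ k.+1)) -/q1; ring.
have e0 : cZ d k = - trZ pi d k - q0 * pi ^+ k.
  by rewrite /cZ {2}(divz_eq (- trZ pi d k) (pi ^+ k)) -/q0; ring.
exists (- d k - q1 * pi + q0); rewrite e1 e0 trZS exprS; ring.
Qed.

Lemma trZ_neg d k : trZ pi (negZ pi d) k = cZ d k.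
Proof.
elim: k => [|k IH]; first by rewrite /trZ big_ord0 /cZ expr0 modz1.
rewrite trZS IH -(cZ_S d k) /negZ -/(cZ d k.+1).
by rewrite addrC -divz_eq.
Qed.

Lemma negZ_digits d : digitsZ pi (negZ pi d).
Proof.
move=> i; rewrite /negZ -/(cZ d i.+1).
have [h1 h2] := andP (cZ_bound d i.+1).
rewrite divz_ge0 ?piX_gt0 // h1 /= ltz_divLR ?piX_gt0 //.
by rewrite -exprS.
Qed.

Lemma trZ_inj d e : (forall k, trZ pi d k = trZ pi e k) -> forall i, d i = e i.
Proof.
move=> h i; have := h i.+1; rewrite !trZS h => /addrI /mulIf; apply.
exact: piX_neq0.
Qed.

Lemma negZK d : digitsZ pi d -> forall i, negZ pi (negZ pi d) i = d i.
Proof.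
move=> hd; apply: trZ_inj => k.
rewrite trZ_neg /cZ trZ_neg /cZ.
have h := modzNm (- trZ pi d k) (pi ^+ k).
rewrite opprK in h; rewrite h.
by rewrite modz_small // trZ_bound.
Qed.

Lemma negZ_agree d e i : (forall j, (j <= i)%N -> d j = e j) -> negZ pi d i = negZ pi e i.
Proof.
move=> h; rewrite /negZ; congr (((- _) %% _)%Z %/ _)%Z.
by apply: eq_bigr => j _; rewrite h // -ltnS.
Qed.

Lemma trZ_split d k N : trZ pi d (k + N) = trZ pi d k + pi ^+ k * trZ pi (fun i => d (k + i)%N) N.
Proof.
rewrite /trZ big_split_ord /= mulr_sumr; congr (_ + _).
by apply: eq_bigr => i _ /=; rewrite exprD; ring.
Qed.

Lemma negZ_small d N : digitsZ pi d -> (0 < N)%N -> (forall k, d (k + N)%N = d k) ->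
  d N.-1 = 0 -> ratZ_lt1 pi (negZ pi d).
Proof.
move=> hd hN hper hz.
exists (trZ pi d N), (pi ^+ N - 1); split; [|split].
- rewrite subr_eq0; apply/eqP => h.
  have : pi ^+ 1 <= pi ^+ N by rewrite ler_eXn2l.
  rewrite h expr1; lia.
- move=> k; rewrite trZ_neg.
  set q0 := ((- trZ pi d k) %/ pi ^+ k)%Z.
  have e0 : cZ d k = - trZ pi d k - q0 * pi ^+ k.
    by rewrite /cZ {2}(divz_eq (- trZ pi d k) (pi ^+ k)) -/q0; ring.
  have e1 := trZ_split d k N.
  have e2 := trZ_split d N k.
  have e3 : trZ pi (fun i => d (N + i)%N) k = trZ pi d k.
    by apply: eq_bigr => i _; rewrite addnC hper.
  rewrite e3 addnC e1 in e2.
  apply/dvdzP; exists (- trZ pi (fun i : nat => d (k + i)%N) N - (pi ^+ N - 1) * q0).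
  rewrite e0.
  have -> : trZ pi d N = trZ pi d k + pi ^+ k * trZ pi (fun i : nat => d (k + i)%N) N - pi ^+ N * trZ pi d k.
    by rewrite e2; ring.
  ring.
- have hN1 : N = N.-1.+1 by rewrite prednK.
  rewrite hN1 trZS hz mul0r addr0.
  have [h1 h2] := andP (trZ_bound hd N.-1).
  have h3 : pi ^+ N.-1 <= pi ^+ N - 1.
    have := piX_gt0 N.-1; rewrite [in pi ^+ N]hN1 exprS; nia.
  rewrite -hN1 !ger0_norm //; lia.
Qed.
End ZDig.



Section PDig.
Variable Fq : fieldType.
Variable pi : {poly Fq}.
Hypothesis pi_gt1 : (1 < size pi)%N.

Lemma pi_neq0 : pi != 0. Proof. by rewrite -size_poly_gt0; apply: ltnW. Qed.
Lemma piXP_neq0 k : pi ^+ k != 0. Proof. by rewrite expf_neq0 // pi_neq0. Qed.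

Lemma size_piX k : size (pi ^+ k) = ((size pi).-1 * k).+1.
Proof.
rewrite -size_exp prednK // size_poly_gt0; exact: piXP_neq0.
Qed.
Lemma spi_gt0 : (0 < (size pi).-1)%N. Proof. by rewrite -ltnS prednK // ltnW. Qed.
Lemma spi_eq : size pi = ((size pi).-1).+1. Proof. by rewrite prednK // ltnW. Qed.

Lemma trPS d k : trP pi d k.+1 = trP pi d k + d k * pi ^+ k.
Proof. by rewrite /trP big_ord_recr. Qed.

Lemma trP_bound d : digitsP pi d -> forall k, (size (trP pi d k) < size (pi ^+ k))%N.
Proof.
move=> hd; elim=> [|k IH]; first by rewrite /trP big_ord0 expr0 size_poly0 size_poly1.
rewrite trPS; apply: leq_ltn_trans (size_polyD _ _) _.
rewrite gtn_max; apply/andP; split.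
  by apply: (ltn_trans IH); rewrite !size_piX; have := spi_gt0; nia.
apply: leq_ltn_trans (size_polyMleq _ _) _.
have := hd k; rewrite !size_piX spi_eq /=; have := spi_gt0; nia.
Qed.

Lemma negP_E d : digitsP pi d -> forall i, Defs.negP pi d i = - d i.
Proof.
move=> hd i; rewrite /Defs.negP modNp modp_small ?trP_bound // trPS opprD divpD.
rewrite divpN divp_small ?trP_bound // oppr0 add0r -mulNr mulpK //.
exact: piXP_neq0.
Qed.

Lemma negP_digits d : digitsP pi d -> digitsP pi (Defs.negP pi d).
Proof. by move=> hd i; rewrite negP_E // size_polyN. Qed.

Lemma negPK d : digitsP pi d -> forall i, Defs.negP pi (Defs.negP pi d) i = d i.
Proof.
move=> hd i; rewrite (negP_E (negP_digits hd)) (negP_E hd); exact: opprK.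
Qed.

Lemma negP_agree d e i : (forall j, (j <= i)%N -> d j = e j) -> Defs.negP pi d i = Defs.negP pi e i.
Proof.
move=> h; rewrite /negP; congr (((- _) %% _) %/ _).
by apply: eq_bigr => j _; rewrite h // -ltnS.
Qed.

Lemma trP_split d k N : trP pi d (k + N) = trP pi d k + pi ^+ k * trP pi (fun i => d (k + i)%N) N.
Proof.
rewrite /trP big_split_ord /= mulr_sumr; congr (_ + _).
by apply: eq_bigr => i _ /=; rewrite exprD; ring.
Qed.

Lemma negP_small d N : digitsP pi d -> (0 < N)%N -> (forall k, d (k + N)%N = d k) ->
  ratP_lt1 pi (Defs.negP pi d).
Proof.
move=> hd hN hper.
have hb : size (pi ^+ N - 1) = size (pi ^+ N).
  by rewrite size_polyDl // size_polyN size_poly1 size_piX; have := spi_gt0; nia.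
exists (trP pi d N), (pi ^+ N - 1); split; [|split].
- by rewrite -size_poly_gt0 hb size_poly_gt0 piXP_neq0.
- move=> k.
  have -> : trP pi (Defs.negP pi d) k = - trP pi d k.
    by rewrite /trP -sumrN; apply: eq_bigr => i _; rewrite negP_E // mulNr.
  have e1 := trP_split d k N.
  have e2 := trP_split d N k.
  have e3 : trP pi (fun i => d (N + i)%N) k = trP pi d k.
    by apply: eq_bigr => i _; rewrite addnC hper.
  rewrite e3 addnC e1 in e2.
  apply/dvdpP; exists (- trP pi (fun i : nat => d (k + i)%N) N).
  have -> : trP pi d N = trP pi d k + pi ^+ k * trP pi (fun i : nat => d (k + i)%N) N - pi ^+ N * trP pi d k.
    by rewrite e2; ring.
  ring.
- by rewrite hb trP_bound.
Qed.
End PDig.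



Section Obar.
Variables (I1 I2 : finType) (Fq : fieldType).
Variables (piZ : I1 -> int) (piP : I2 -> {poly Fq}).
Hypothesis hpiZ : forall t, 1 < piZ t.
Hypothesis hpiP : forall t, (1 < size (piP t))%N.

Local Notation pt := (pt I1 I2 Fq).
Local Notation inO := (inO piZ piP).
Local Notation negO := (negO piZ piP).
Local Notation phiO := (@phiO I1 I2 Fq).
Local Notation agreeO := (@agreeO I1 I2 Fq).

Definition zeroO : pt := (fun _ _ => 0, fun _ _ => 0).
Definition zpre (i : nat) (w : pt) : pt :=
  (fun t k => if (k < i)%N then 0 else w.1 t (k - i)%N,
   fun t k => if (k < i)%N then 0 else w.2 t (k - i)%N).
Definition cutO (m : nat) (w : pt) : pt :=
  (fun t k => if (k < m)%N then w.1 t k else 0,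
   fun t k => if (k < m)%N then w.2 t k else 0).
Definition perO (m n : nat) (u : pt) : pt :=
  (fun t k => if (k %% (m + n) < m)%N then u.1 t (k %% (m + n))%N else 0,
   fun t k => if (k %% (m + n) < m)%N then u.2 t (k %% (m + n))%N else 0).
Definition suppO (m : nat) (u : pt) : Prop :=
  (forall t k, (m <= k)%N -> u.1 t k = 0) /\ (forall t k, (m <= k)%N -> u.2 t k = 0).

Lemma eqO_eq (x y : pt) : eqO x y -> x = y.
Proof.
case: x y => [x1 x2] [y1 y2] [h1 h2] /=.
congr (_, _); apply: functional_extensionality => t;
  apply: functional_extensionality => i; [exact: h1 | exact: h2].
Qed.

Lemma iterO1 j (x : pt) t k : (iter j phiO x).1 t k = x.1 t (k + j)%N.
Proof.
elim: j k => [|j IH] k /=; first by rewrite addn0.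
by rewrite /phiD IH addSnnS.
Qed.
Lemma iterO2 j (x : pt) t k : (iter j phiO x).2 t k = x.2 t (k + j)%N.
Proof.
elim: j k => [|j IH] k /=; first by rewrite addn0.
by rewrite /phiD IH addSnnS.
Qed.

Lemma iterSO j (x : pt) : iter j.+1 phiO x = iter j phiO (phiO x).
Proof. by rewrite iterSr. Qed.

Lemma agreeO_le N M (x y : pt) : (M <= N)%N -> agreeO N x y -> agreeO M x y.
Proof.
move=> hMN [h1 h2]; split=> t i hi; [apply: h1 | apply: h2]; exact: leq_trans hi hMN.
Qed.

Lemma agreeO_refl N (x : pt) : agreeO N x x.
Proof. by split. Qed.

Lemma agreeO_iter N j (x y : pt) : agreeO (N + j) x y -> agreeO N (iter j phiO x) (iter j phiO y).
Proof.
move=> [h1 h2]; split=> t i hi; rewrite ?iterO1 ?iterO2; [apply: h1 | apply: h2]; lia.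
Qed.

Lemma agreeO_zpre N i (x y : pt) : agreeO N x y -> agreeO (N + i) (zpre i x) (zpre i y).
Proof.
move=> [h1 h2]; split=> t k hk /=; case: ifP => // hki;
  [apply: h1 | apply: h2]; move/negbT: hki; lia.
Qed.

Lemma agreeO_zero_zpre i (w : pt) : agreeO i zeroO (zpre i w).
Proof. by split=> t k hk /=; rewrite hk. Qed.

Lemma agreeO_cut m (y : pt) : agreeO m y (cutO m y).
Proof. by split=> t k hk /=; rewrite hk. Qed.

Lemma suppO_cut m (y : pt) : suppO m (cutO m y).
Proof. by split=> t k hk /=; rewrite ltnNge hk. Qed.

Lemma suppO_phi m (u : pt) : suppO m u -> suppO m (phiO u).
Proof. by move=> [h1 h2]; split=> t k hk /=; rewrite /phiD; [apply: h1 | apply: h2]; lia. Qed.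

Lemma suppO_le m M (u : pt) : (m <= M)%N -> suppO m u -> suppO M u.
Proof. by move=> hm [h1 h2]; split=> t k hk; [apply: h1 | apply: h2]; lia. Qed.

Lemma inO_phi (x : pt) : inO x -> inO (phiO x).
Proof. by move=> [h1 h2]; split=> t i /=; rewrite /phiD; [apply: h1 | apply: h2]. Qed.

Lemma inO_iter j (x : pt) : inO x -> inO (iter j phiO x).
Proof. by elim: j => //= j IH hx; apply: inO_phi; apply: IH. Qed.

Lemma inO_zero : inO zeroO.
Proof.
split=> t i /=; first by have := hpiZ t; lia.
by rewrite size_poly0; apply: ltn_trans (hpiP t).
Qed.

Lemma inO_zpre i (w : pt) : inO w -> inO (zpre i w).
Proof.
move=> [h1 h2]; have [z1 z2] := inO_zero.
by split=> t k /=; case: ifP => _; [apply: z1 | apply: h1 | apply: z2 | apply: h2].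
Qed.

Lemma inO_cut m (w : pt) : inO w -> inO (cutO m w).
Proof.
move=> [h1 h2]; have [z1 z2] := inO_zero.
by split=> t k /=; case: ifP => _; [apply: h1 | apply: z1 | apply: h2 | apply: z2].
Qed.

Lemma inO_per m n (w : pt) : inO w -> inO (perO m n w).
Proof.
move=> [h1 h2]; have [z1 z2] := inO_zero.
by split=> t k /=; case: ifP => _; [apply: h1 | apply: z1 | apply: h2 | apply: z2].
Qed.

Lemma inO_neg (x : pt) : inO x -> inO (negO x).
Proof.
move=> [h1 h2]; split=> t /=; first exact: negZ_digits.
exact: negP_digits.
Qed.

Lemma negOK (x : pt) : inO x -> negO (negO x) = x.
Proof.
move=> [h1 h2]; apply: eqO_eq; split=> t i /=; first exact: negZK.
exact: negPK.
Qed.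

Lemma agreeO_neg N (x y : pt) : agreeO N x y -> agreeO N (negO x) (negO y).
Proof.
move=> [h1 h2]; split=> t i hi /=.
  by apply: negZ_agree => j hj; apply: h1; lia.
by apply: negP_agree => j hj; apply: h2; lia.
Qed.

Lemma perO_agree m n (u : pt) : suppO m u -> agreeO (m + n) u (perO m n u).
Proof.
move=> [h1 h2]; split=> t k hk /=; rewrite modn_small //;
  case: ifP => [_ //| /negbT]; rewrite -leqNgt => hmk.
  by rewrite h1.
by rewrite h2.
Qed.

Lemma perO_period m n (u : pt) : eqO (iter (m + n) phiO (perO m n u)) (perO m n u).
Proof. by split=> t k; rewrite ?iterO1 ?iterO2 /= modnDr. Qed.

Lemma perO_shift m n k (u : pt) : (k < n)%N ->
  iter (m + k) phiO (perO m n u) = zpre (n - k) (perO m n u).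
Proof.
move=> hk; apply: eqO_eq; split=> t i; rewrite ?iterO1 ?iterO2 /=;
 (case: (ltnP i (n - k)) => hi;
 [ rewrite modn_small; [rewrite ifF //; apply/negbTE; rewrite -leqNgt; lia | lia]
 | have -> : (i + (m + k) = (i - (n - k)) + (m + n))%N by lia];
 by rewrite modnDr).
Qed.

Lemma smallO_per m n (u : pt) : inO u -> (0 < n)%N -> smallO piZ piP (negO (perO m n u)).
Proof.
move=> hu hn; have [h1 h2] := inO_per m n hu.
split=> t /=.
- apply: (negZ_small (hpiZ t) (h1 t) (N := (m + n)%N)); first lia.
    by move=> k /=; rewrite modnDr.
  rewrite /= modn_small; last lia.
  rewrite ifF //; apply/negbTE; rewrite -leqNgt; lia.
- apply: (negP_small (hpiP t) (h2 t) (N := (m + n)%N)); first lia.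
  by move=> k /=; rewrite modnDr.
Qed.

End Obar.



Section Abs.
Variables (R : realType) (K : fieldType) (ab : K -> R).
Hypothesis Hab : nonarch_abs ab.

Lemma ab0 : ab 0 = 0. Proof. by case: Hab. Qed.
Lemma ab_gt0 x : x != 0 -> 0 < ab x. Proof. by case: Hab => _ h _ _; apply: h. Qed.
Lemma abM x y : ab (x * y) = ab x * ab y. Proof. by case: Hab. Qed.
Lemma ab_ultra x y : ab (x + y) <= Num.max (ab x) (ab y). Proof. by case: Hab. Qed.
Lemma ab_ge0 x : 0 <= ab x.
Proof. by have [->|/ab_gt0/ltW //] := eqVneq x 0; rewrite ab0. Qed.
Lemma ab1 : ab 1 = 1.
Proof.
have h := abM 1 1; rewrite mulr1 in h.
have hp : 0 < ab 1 by apply: ab_gt0; exact: oner_neq0.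
by apply: (mulfI (lt0r_neq0 hp)); rewrite mulr1 -h.
Qed.
Lemma abN1 : ab (-1) = 1.
Proof.
have h := abM (-1) (-1); rewrite mulrNN mulr1 ab1 in h.
have hp : 0 < ab (-1) by apply: ab_gt0; rewrite oppr_eq0 oner_neq0.
nra.
Qed.
Lemma abN x : ab (- x) = ab x.
Proof. by rewrite -mulN1r abM abN1 mul1r. Qed.
Lemma abB x y : ab (x - y) = ab (y - x).
Proof. by rewrite -abN opprB. Qed.
Lemma abD_lt x y e : ab x < e -> ab y < e -> ab (x + y) < e.
Proof. by move=> h1 h2; apply: le_lt_trans (ab_ultra x y) _; rewrite gt_max h1 h2. Qed.
Lemma abD_le x y e : ab x <= e -> ab y <= e -> ab (x + y) <= e.
Proof. by move=> h1 h2; apply: le_trans (ab_ultra x y) _; rewrite ge_max h1 h2. Qed.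
Lemma ab_tri x y z e : ab (x - y) < e -> ab (y - z) < e -> ab (x - z) < e.
Proof. by move=> h1 h2; have := abD_lt h1 h2; rewrite addrA subrK. Qed.
Lemma ab_le_tri x y : ab x <= Num.max (ab y) (ab (x - y)).
Proof. by have := ab_ultra y (x - y); rewrite addrC subrK. Qed.
Lemma ab_near1 a : ab (a - 1) < 1 -> ab a = 1.
Proof.
move=> h; apply/eqP; rewrite eq_le; apply/andP; split.
  apply: le_trans (ab_le_tri a 1) _; rewrite ge_max ab1 lexx /=; exact: ltW.
have := ab_le_tri 1 a; rewrite ab1 le_max abB => /orP [//|h']; exfalso.
by move: (lt_le_trans h h'); rewrite ltxx.
Qed.
Lemma ab_eq0 x : (forall e, 0 < e -> ab x < e) -> x = 0.
Proof.
move=> h; apply/eqP; apply: contraT => hx.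
by have := h _ (ab_gt0 hx); rewrite ltxx.
Qed.
Lemma ab_inv x : x != 0 -> ab (x^-1) = (ab x)^-1.
Proof.
move=> hx; have := abM x x^-1; rewrite mulfV // ab1 => h.
have hp := ab_gt0 hx.
by apply: (mulfI (lt0r_neq0 hp)); rewrite -h mulfV // lt0r_neq0.
Qed.

Lemma near1_mul a b e : e <= 1 -> ab (a - 1) < e -> ab (b - 1) < e -> ab (a * b - 1) < e.
Proof.
move=> he ha hb.
have -> : a * b - 1 = a * (b - 1) + (a - 1) by ring.
apply: abD_lt => //; rewrite abM ab_near1; last exact: lt_le_trans ha he.
by rewrite mul1r.
Qed.

Lemma prod_near1 (I : Type) (r : seq I) (P : pred I) (f : I -> K) e : 0 < e -> e <= 1 ->
  (forall i, P i -> ab (f i - 1) < e) -> ab (\prod_(i <- r | P i) f i - 1) < e.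
Proof.
move=> he0 he1 h; apply: (big_ind (fun a => ab (a - 1) < e)).
- by rewrite subrr ab0.
- by move=> a b; apply: near1_mul.
- exact: h.
Qed.

End Abs.



Section Cont.
Variables (I1 I2 : finType) (Fq : fieldType).
Variables (piZ : I1 -> int) (piP : I2 -> {poly Fq}).
Hypothesis hpiZ : forall t, 1 < piZ t.
Hypothesis hpiP : forall t, (1 < size (piP t))%N.
Variables (R : realType) (K : fieldType) (ab : K -> R).
Hypothesis Hab : nonarch_abs ab.

Local Notation pt := (pt I1 I2 Fq).
Local Notation inO := (inO piZ piP).
Local Notation negO := (negO piZ piP).
Local Notation phiO := (@phiO I1 I2 Fq).
Local Notation agreeO := (@agreeO I1 I2 Fq).

Definition contAt (f : pt -> K) (x : pt) : Prop :=
  forall eps : R, 0 < eps ->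
    exists N : nat, forall y, inO y -> agreeO N x y -> ab (f y - f x) < eps.

Lemma contAt_ext f g x : (forall y, f y = g y) -> contAt f x -> contAt g x.
Proof.
move=> hfg hf e he; have [N hN] := hf e he; exists N => y hy hxy.
by rewrite -!hfg //; apply: hN.
Qed.

Lemma contAt_const c x : contAt (fun _ => c) x.
Proof. by move=> e he; exists 0%N => y _ _; rewrite subrr ab0. Qed.

Lemma contAt_mul f g x : contAt f x -> contAt g x -> contAt (fun y => f y * g y) x.
Proof.
move=> hf hg e he.
set C := ab (f x) + 1; set D := ab (g x) + 1.
have hC : 0 < C by rewrite /C; have := ab_ge0 Hab (f x); lra.
have hD : 0 < D by rewrite /D; have := ab_ge0 Hab (g x); lra.
have he1 : 0 < Num.min 1 (e / D) by rewrite lt_min ltr01 divr_gt0.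
have he2 : 0 < e / C by rewrite divr_gt0.
have [N1 h1] := hf _ he1.
have [N2 h2] := hg _ he2.
exists (maxn N1 N2) => y hy hxy.
have hf1 := h1 y hy (agreeO_le (leq_maxl _ _) hxy).
have hg1 := h2 y hy (agreeO_le (leq_maxr _ _) hxy).
rewrite lt_min in hf1; case/andP: hf1 => hf1 hf2.
have -> : f y * g y - f x * g x = f y * (g y - g x) + (f y - f x) * g x by ring.
apply: (abD_lt Hab); rewrite (abM Hab).
- have hfy : ab (f y) <= C.
    apply: le_trans (ab_le_tri Hab (f y) (f x)) _; rewrite ge_max /C; have := ab_ge0 Hab (f x) => h0; apply/andP; split; lra.
  have := ab_ge0 Hab (g y - g x); have := ab_ge0 Hab (f y).
  have : C * (e / C) = e by rewrite mulrC divfK // lt0r_neq0.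
  nra.
- have := ab_ge0 Hab (g x); have := ab_ge0 Hab (f y - f x).
  have : e / D * D = e by rewrite divfK // lt0r_neq0.
  rewrite /D in hf2 * => hh; nra.
Qed.

Lemma contAt_prod (f : nat -> pt -> K) m x :
  (forall j, (j < m)%N -> contAt (f j) x) -> contAt (fun y => \prod_(j < m) f j y) x.
Proof.
elim: m => [|m IH] h.
  by apply: (@contAt_ext (fun _ => 1)) => [y|]; rewrite ?big_ord0 //; apply: contAt_const.
apply: (@contAt_ext (fun y => (\prod_(j < m) f j y) * f m y)).
  by move=> y; rewrite big_ord_recr.
apply: contAt_mul; last exact: h.
by apply: IH => j hj; apply: h; apply: ltnW.
Qed.

Lemma contAt_comp (g : pt -> pt) c f x :
  (forall y, inO y -> inO (g y)) ->
  (forall N y, agreeO (N + c) x y -> agreeO N (g x) (g y)) ->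
  contAt f (g x) -> contAt (fun y => f (g y)) x.
Proof.
move=> hg hag hf e he; have [N hN] := hf e he; exists (N + c)%N => y hy hxy.
by apply: hN; [apply: hg | apply: hag].
Qed.

Lemma contAt_inv f x : f x != 0 -> contAt f x -> contAt (fun y => (f y)^-1) x.
Proof.
move=> hx hf e he.
set C := ab (f x).
have hC : 0 < C by apply: (ab_gt0 Hab).
have he1 : 0 < Num.min C (e * C * C) by rewrite lt_min hC !mulr_gt0.
have [N hN] := hf _ he1; exists N => y hy hxy.
have := hN y hy hxy; rewrite lt_min => /andP [h1 h2].
have hfy : ab (f y) = C.
  apply/eqP; rewrite eq_le; apply/andP; split.
    apply: le_trans (ab_le_tri Hab (f y) (f x)) _; rewrite ge_max lexx /=; exact: ltW.
  have := ab_le_tri Hab (f x) (f y); rewrite le_max (abB Hab) => /orP [//|h']; exfalso.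
  by move: (lt_le_trans h1 h'); rewrite ltxx.
have hy0 : f y != 0.
  by apply/eqP => h0; move: hfy; rewrite h0 (ab0 Hab) => h00; move: hC; rewrite -h00 ltxx.
have -> : (f y)^-1 - (f x)^-1 = (f x - f y) * ((f y)^-1 * (f x)^-1).
  by rewrite mulrBl mulrCA mulfV // mulr1 mulrA mulfV // mul1r.
rewrite !(abM Hab) !(ab_inv Hab) // hfy (abB Hab) -/C.
have hCi : C^-1 * C^-1 * (C * C) = 1 by field; apply: lt0r_neq0.
have := ab_ge0 Hab (f y - f x).
have hi : 0 < C^-1 by rewrite invr_gt0.
nra.
Qed.
End Cont.

Section Main.
Variables (I1 I2 : finType) (Fq : fieldType).
Variables (piZ : I1 -> int) (piP : I2 -> {poly Fq}).
Hypothesis hpiZ : forall t, 1 < piZ t.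
Hypothesis hpiP : forall t, (1 < size (piP t))%N.
Variables (R : realType) (K : fieldType) (ab : K -> R).
Hypothesis Hab : nonarch_abs ab.
Hypothesis Hcomp : complete_abs ab.

Local Notation pt := (pt I1 I2 Fq).
Local Notation inO := (inO piZ piP).
Local Notation negO := (negO piZ piP).
Local Notation phiO := (@phiO I1 I2 Fq).
Local Notation agreeO := (@agreeO I1 I2 Fq).
Local Notation contAt := (contAt piZ piP ab).

Variable H : pt -> K.
Hypothesis Hc : forall x, inO x -> contAt H x.
Hypothesis Hnz : forall x, inO x -> H x != 0.
Hypothesis Horb : forall m n u, inO u -> (0 < n)%N -> suppO m u ->
  \prod_(j < m + n) H (iter j phiO (perO m n u)) = 1.

Lemma H0 : H (zeroO I1 I2 Fq) = 1.
Proof.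
have := @Horb 0 1 _ (inO_zero hpiZ hpiP) (ltn0Sn 0) (suppO_cut 0 (zeroO I1 I2 Fq)).
rewrite big_ord1 /= => <-; congr H; try (apply: eqO_eq; split=> t i /=; rewrite modn1).
Qed.

Definition Pn (n : nat) (w : pt) : K := \prod_(0 <= i < n) H (zpre i.+1 w).

Lemma tailH e : 0 < e -> exists I, forall w, inO w -> forall i, (I <= i)%N -> ab (H (zpre i w) - 1) < e.
Proof.
move=> he; have [N hN] := Hc (inO_zero hpiZ hpiP) he; exists N => w hw i hi.
rewrite -H0; apply: hN; first exact: inO_zpre.
exact: agreeO_le hi (agreeO_zero_zpre i w).
Qed.

Lemma tailR e : 0 < e -> e <= 1 -> exists I, forall w, inO w -> forall a b, (I <= a)%N ->
  ab (\prod_(a <= i < b) H (zpre i.+1 w) - 1) < e.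
Proof.
move=> he0 he1; have [I hI] := tailH he0; exists I => w hw a b ha.
rewrite big_nat_cond; apply: (prod_near1 Hab) => // i /andP [/andP [hai _] _].
apply: hI => //; lia.
Qed.

Lemma Pn_split a b w : (a <= b)%N -> Pn b w = Pn a w * \prod_(a <= i < b) H (zpre i.+1 w).
Proof. by move=> hab; rewrite /Pn (@big_cat_nat _ _ _ a 0 b). Qed.

Lemma Pn_neq0 n w : inO w -> Pn n w != 0.
Proof.
move=> hw; rewrite /Pn; apply: (big_ind (fun a => a != 0)) => //.
- exact: oner_neq0.
- by move=> a b ha hb; rewrite mulf_neq0.
- by move=> i _; apply: Hnz; apply: inO_zpre.
Qed.


Lemma real_aux (C e : R) : 0 <= C -> 0 < e ->
  [/\ 0 < e / (C + e + 1), e / (C + e + 1) <= 1 & C * (e / (C + e + 1)) < e].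
Proof.
move=> hC he; have hD : 0 < C + e + 1 by lra.
split.
- by rewrite divr_gt0.
- by rewrite ler_pdivrMr // mul1r; lra.
- rewrite mulrA ltr_pdivrMr //; nra.
Qed.

Lemma Pn_abs w : inO w -> exists I0, forall n, (I0 <= n)%N -> ab (Pn n w) = ab (Pn I0 w).
Proof.
move=> hw; have [I hI] := tailR ltr01 (lexx 1); exists I => n hn.
by rewrite (Pn_split _ hn) (abM Hab) [X in _ * X](ab_near1 Hab) ?mulr1 //; apply: hI.
Qed.

Definition islim (u : nat -> K) (l : K) :=
  forall e : R, 0 < e -> exists N, forall n, (N <= n)%N -> ab (u n - l) < e.

Definition Q (w : pt) : K := epsilon (inhabits 0) (islim (fun n => Pn n w)).

Lemma Pn_cauchy w : inO w -> forall e : R, 0 < e -> exists N, forall a b, (N <= a)%N -> (a <= b)%N ->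
  ab (Pn b w - Pn a w) < e.
Proof.
move=> hw e he; have [I0 hI0] := Pn_abs hw.
set C := ab (Pn I0 w).
have [h1 h2 h3] := real_aux (ab_ge0 Hab (Pn I0 w)) he.
have [I hI] := tailR h1 h2.
exists (maxn I0 I) => a b ha hab.
rewrite (Pn_split _ hab).
have -> : Pn a w * \prod_(a <= i < b) H (zpre i.+1 w) - Pn a w =
  Pn a w * (\prod_(a <= i < b) H (zpre i.+1 w) - 1) by ring.
rewrite (abM Hab) hI0; last exact: leq_trans (leq_maxl _ _) ha.
have := hI w hw a b (leq_trans (leq_maxr _ _) ha).
have := ab_ge0 Hab (Pn I0 w); rewrite -/C => hC hR.
apply: le_lt_trans h3; apply: ler_wpM2l => //; exact: ltW.
Qed.

Lemma Q_lim w : inO w -> islim (fun n => Pn n w) (Q w).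
Proof.
move=> hw; rewrite /Q; apply: epsilon_spec.
apply: Hcomp => e he; have [N hN] := Pn_cauchy hw he; exists N => m n hm hn.
case: (leqP m n) => hmn.
  by rewrite (abB Hab); apply: hN.
by apply: hN => //; apply: ltnW.
Qed.

Lemma PQ w : inO w -> forall e : R, 0 < e -> exists N, forall n w', (N <= n)%N -> inO w' ->
  agreeO N w w' -> ab (Pn n w' - Q w) < e.
Proof.
move=> hw e he.
have [N1 hN1] := Q_lim hw he.
have [I0 hI0] := Pn_abs hw.
set C := ab (Pn I0 w).
have [h1 h2 h3] := real_aux (ab_ge0 Hab (Pn I0 w)) he.
have [I hI] := tailR h1 h2.
set I' := maxn I0 I.
have hc : contAt (Pn I') w.
  apply: (contAt_ext (f := fun y => \prod_(j < I') H (zpre j.+1 y))).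
    by move=> y; rewrite /Pn big_mkord.
  apply: (contAt_prod Hab (f := fun j y => H (zpre j.+1 y))) => j _.
  apply: (contAt_comp (g := zpre j.+1) (c := 0%N)).
  - by move=> y hy; apply: inO_zpre.
  - move=> N y hy; rewrite addn0 in hy; apply: agreeO_le (agreeO_zpre j.+1 hy); exact: leq_addr.
  - by apply: Hc; apply: inO_zpre.
have [N2 hN2] := hc e he.
exists (maxn (maxn N1 I') N2) => n w' hn hw' hww'.
have hnN1 : (N1 <= n)%N by move: hn; lia.
have hnI' : (I' <= n)%N by move: hn; lia.
have hag : agreeO N2 w w' by apply: agreeO_le hww'; lia.
have -> : Pn n w' - Q w = (Pn n w' - Pn n w) + (Pn n w - Q w) by ring.
apply: (abD_lt Hab); last exact: hN1.
rewrite (Pn_split _ hnI') (Pn_split w hnI').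
set R1 := \prod_(I' <= i < n) H (zpre i.+1 w').
set R2 := \prod_(I' <= i < n) H (zpre i.+1 w).
have hR1 : ab (R1 - 1) < e / (C + e + 1) by apply: hI => //; apply: leq_maxr.
have hR2 : ab (R2 - 1) < e / (C + e + 1) by apply: hI => //; apply: leq_maxr.
have -> : Pn I' w' * R1 - Pn I' w * R2 = (Pn I' w' - Pn I' w) * R1 + Pn I' w * (R1 - R2) by ring.
apply: (abD_lt Hab); rewrite (abM Hab).
  rewrite [X in _ * X](ab_near1 Hab) ?mulr1; first exact: (hN2 w' hw' hag).
  exact: lt_le_trans hR1 h2.
rewrite hI0; last exact: leq_maxl.
have hR : ab (R1 - R2) < e / (C + e + 1).
  have -> : R1 - R2 = (R1 - 1) + - (R2 - 1) by ring.
  by apply: (abD_lt Hab) => //; rewrite (abN Hab).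
apply: le_lt_trans h3; apply: ler_wpM2l; first exact: ab_ge0.
exact: ltW.
Qed.


Lemma Q_cont w : inO w -> contAt Q w.
Proof.
move=> hw e he; have [N hN] := PQ hw he; exists N => y hy hwy.
have [N' hN'] := Q_lim hy he.
have -> : Q y - Q w = (Q y - Pn (maxn N N') y) + (Pn (maxn N N') y - Q w) by ring.
apply: (abD_lt Hab).
  by rewrite (abB Hab); apply: hN'; apply: leq_maxr.
by apply: hN => //; apply: leq_maxl.
Qed.

Lemma Q_neq0 w : inO w -> Q w != 0.
Proof.
move=> hw; have [I0 hI0] := Pn_abs hw.
have hC : 0 < ab (Pn I0 w) by apply: (ab_gt0 Hab); apply: Pn_neq0.
have [N hN] := Q_lim hw hC.
apply/eqP => hQ.
have := hN (maxn N I0) (leq_maxl _ _); rewrite hQ subr0 hI0 ?ltxx //.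
exact: leq_maxr.
Qed.

Definition Lf (m : nat) (w : pt) : K := \prod_(j < m) H (iter j phiO w).

Lemma Lf_cont m u : inO u -> contAt (Lf m) u.
Proof.
move=> hu; apply: (contAt_prod Hab (f := fun j w => H (iter j phiO w))) => j _.
apply: (contAt_comp (g := iter j phiO) (c := j)).
- by move=> y hy; apply: inO_iter.
- by move=> N y hy; apply: agreeO_iter.
- by apply: Hc; apply: inO_iter.
Qed.

Lemma orbit_id m n u : inO u -> (0 < n)%N -> suppO m u ->
  Lf m (perO m n u) * Pn n (perO m n u) = 1.
Proof.
move=> hu hn hs; have := Horb hu hn hs.
rewrite big_split_ord /= => <-; congr (_ * _).
rewrite /Pn big_nat_rev big_mkord; apply: eq_bigr => i _ /=.
rewrite perO_shift //; congr (H (zpre _ _)).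
have := ltn_ord i; lia.
Qed.

Lemma QL m u : inO u -> suppO m u -> Q u * Lf m u = 1.
Proof.
move=> hu hs; apply/eqP; rewrite -subr_eq0; apply/eqP; apply: (ab_eq0 Hab) => e he.
set L := Lf m u; set D := ab (Q u).
have hD0 : 0 <= D := ab_ge0 Hab _.
have hL0 : 0 <= ab L := ab_ge0 Hab _.
have [h1 h2 h3] := real_aux hL0 he.
have hD1 : 0 <= D + 1 by lra.
have [g1 g2 g3] := real_aux hD1 he.
have [N1 hN1] := PQ hu h1.
have [N2 hN2] := Lf_cont m hu g1.
set n := (N1 + N2).+1.
set z := perO m n u.
have hz : inO z := inO_per hpiZ hpiP m n hu.
have hag := perO_agree n hs.
have hP : ab (Pn n z - Q u) < e / (ab L + e + 1).
  by apply: hN1 => //; [rewrite /n; lia | apply: agreeO_le hag; rewrite /n; lia].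
have hA : ab (Lf m z - L) < e / (D + 1 + e + 1).
  by apply: hN2 => //; apply: agreeO_le hag; rewrite /n; lia.
have horb := orbit_id hu (ltn0Sn (N1 + N2)) hs; rewrite -/n -/z in horb.
rewrite -horb.
have -> : Q u * L - Lf m z * Pn n z = (Q u - Pn n z) * L + Pn n z * (L - Lf m z) by ring.
apply: (abD_lt Hab); rewrite (abM Hab).
  rewrite (abB Hab); apply: le_lt_trans h3; rewrite mulrC.
  by apply: ler_wpM2l => //; apply: ltW.
have hPn : ab (Pn n z) <= D + 1.
  apply: le_trans (ab_le_tri Hab _ (Q u)) _; rewrite ge_max -/D; apply/andP; split; first lra.
  by apply: le_trans (ltW hP) _; apply: le_trans h2 _; lra.
apply: le_lt_trans g3.
rewrite (abB Hab); apply: ler_pM => //; first exact: ab_ge0.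
  exact: ab_ge0.
exact: ltW.
Qed.

Lemma Q_cut M y : inO y -> H (cutO M y) * Q (cutO M y) = Q (phiO (cutO M y)).
Proof.
move=> hy; set u := cutO M y.
have hu : inO u := inO_cut hpiZ hpiP M hy.
have hs : suppO M u := suppO_cut M y.
have h1 := QL hu (suppO_le (leqnSn M) hs).
have h2 := QL (inO_phi hu) (suppO_phi hs).
have e1 : Lf M.+1 u = H u * Lf M (phiO u).
  rewrite /Lf big_ord_recl /=; congr (_ * _); by apply: eq_bigr => i _; rewrite add0n -iterS iterSr.
rewrite e1 in h1.
have hL : Lf M (phiO u) != 0.
  by apply/eqP => h0; move: h2; rewrite h0 mulr0 => /eqP; rewrite eq_sym oner_eq0.
apply: (mulIf hL); rewrite h2 -h1; ring.
Qed.

Lemma Qphi y : inO y -> Q (phiO y) = H y * Q y.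
Proof.
move=> hy; apply/eqP; rewrite -subr_eq0; apply/eqP; apply: (ab_eq0 Hab) => e he.
have hc1 : contAt (fun w => H w * Q w) y by apply: (contAt_mul Hab); [apply: Hc | apply: Q_cont].
have [N1 hN1] := hc1 e he.
have [N2 hN2] := Q_cont (inO_phi hy) he.
set M := (N1 + N2).+1; set u := cutO M y.
have hu : inO u := inO_cut hpiZ hpiP M hy.
have hag : agreeO M y u := agreeO_cut M y.
have hag2 : agreeO N2 (phiO y) (phiO u).
  have := @agreeO_iter _ _ _ N2 1 y u; apply; apply: agreeO_le hag; rewrite /M; lia.
have -> : Q (phiO y) - H y * Q y = (Q (phiO y) - Q (phiO u)) + (H u * Q u - H y * Q y).
  by rewrite Q_cut //; ring.
apply: (abD_lt Hab).
  by rewrite (abB Hab); apply: hN2 => //; apply: inO_phi.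
by apply: hN1 => //; apply: agreeO_le hag; rewrite /M; lia.
Qed.

End Main.


Unset Implicit Arguments. Set Strict Implicit.


Theorem mainTheorem3
  (Fq : finFieldType) (I1 I2 : finType)
  (p : I1 -> nat) (e1 : I1 -> nat) (v : I2 -> {poly Fq}) (e2 : I2 -> nat)
  (R : realType) (K : fieldType) (ab : K -> R)
  (F : pt I1 I2 Fq -> K) :
  (forall t, prime (p t)) -> (forall t, (0 < e1 t)%N) ->
  (forall t, v t \is monic) -> (forall t, irreducible_poly (v t)) ->
  (forall t, (0 < e2 t)%N) ->
  nonarch_abs ab -> complete_abs ab ->
  let piZ := fun t => ((p t ^ e1 t)%N)%:Z in
  let piP := fun t => v t ^+ e2 t in
  continuousO piZ piP ab F ->
  (forall x, inO piZ piP x -> F x != 0) ->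
  (forall (n : nat) (x : pt I1 I2 Fq), inO piZ piP x -> smallO piZ piP x ->
     eqO (iter n (@phiO I1 I2 Fq) (negO piZ piP x)) (negO piZ piP x) ->
     \prod_(j < n) F (negO piZ piP (iter j (@phiO I1 I2 Fq) (negO piZ piP x))) = 1) ->
  exists G : pt I1 I2 Fq -> K,
    [/\ continuousO piZ piP ab G,
        (forall x, inO piZ piP x -> G x != 0) &
        (forall x, inO piZ piP x -> F x = G x / G (negO piZ piP (phiO (negO piZ piP x))))].
Proof.
move=> hp he1 hv hirr he2 Hab Hcomp piZ piP Fc Fnz Fhyp.
have hpiZ : forall t, 1 < piZ t.
  move=> t; rewrite /piZ ltz_nat.
  apply: leq_trans (prime_gt1 (hp t)) _.
  by rewrite -{1}(expn1 (p t)) leq_exp2l ?prime_gt1.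
have hpiP : forall t, (1 < size (piP t))%N.
  move=> t; rewrite /piP.
  have hv1 : (1 < size (v t))%N by case: (hirr t).
  have hv0 : v t != 0 by rewrite -size_poly_gt0; apply: ltnW.
  have hs : (0 < size (v t ^+ e2 t))%N by rewrite size_poly_gt0 expf_neq0.
  have h := size_exp (v t) (e2 t).
  rewrite -(prednK hs) h ltnS muln_gt0 he2 andbT.
  by rewrite -ltnS prednK // ltnW.
set H := fun y => F (negO piZ piP y).
have Hc : forall x, inO piZ piP x -> contAt piZ piP ab H x.
  move=> x hx; apply: (contAt_comp (g := negO piZ piP) (c := 0%N)).
  - by move=> y hy; apply: inO_neg.
  - by move=> N y; rewrite addn0; apply: agreeO_neg.
  - by move=> e he; apply: Fc => //; apply: inO_neg.
have Hnz : forall x, inO piZ piP x -> H x != 0.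
  by move=> x hx; apply: Fnz; apply: inO_neg.
have Horb : forall m n u, inO piZ piP u -> (0 < n)%N -> suppO m u ->
  \prod_(j < m + n) H (iter j (@phiO I1 I2 Fq) (perO m n u)) = 1.
  move=> m n u hu hn hs.
  have hz := inO_per hpiZ hpiP m n hu.
  have := Fhyp (m + n)%N _ (inO_neg hpiZ hpiP hz) (smallO_per hpiZ hpiP m hu hn).
  rewrite (negOK hpiZ hpiP hz); apply; exact: perO_period.
set Q' := Q ab H.
have hQnz := Q_neq0 hpiZ hpiP Hab Hcomp Hc Hnz Horb.
have hQc := Q_cont hpiZ hpiP Hab Hcomp Hc Horb.
have hQphi := Qphi hpiZ hpiP Hab Hcomp Hc Horb.
exists (fun x => (Q' (negO piZ piP x))^-1); split.
- move=> x hx; apply: (contAt_inv Hab).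
    by rewrite /Q' hQnz //; apply: inO_neg.
  apply: (contAt_comp (g := negO piZ piP) (c := 0%N)).
  + by move=> y hy; apply: inO_neg.
  + by move=> N y; rewrite addn0; apply: agreeO_neg.
  + by apply: hQc; apply: inO_neg.
- by move=> x hx; rewrite invr_eq0 /Q' hQnz //; apply: inO_neg.
- move=> x hx.
  have hy := inO_neg hpiZ hpiP hx.
  rewrite negOK //; last exact: inO_phi.
  rewrite /Q' hQphi //.
  have hQ := hQnz _ hy.
  by rewrite /H negOK // invrK mulrCA mulVf ?mulr1.

Qed.
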